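(* Let $\ell\ge1$, $N=2^\ell$, $n_c,n_v\ge1$, ${\mathbf x}_{h,u}\in\mathbb{F}_2^\ell$ for $h\in\{0,\dots,n_c-1\}$, $u\in\{0,\dots,n_v-1\}$, and let $H$ be the block matrix whose $(h,u)$ block is $P_{{\mathbf x}_{h,u}}$. For $0\le h<i<j\le n_c-1$ and $m\in\{0,\dots,n_v-1\}$, let $\rho^{h,i,j}_m$ be the number of ordered pairs $(u,u')$ with $u,u'\in\{0,\dots,n_v-1\}\setminus\{m\}$, $u\ne u'$, and $${\mathbf x}_{h,u}+{\mathbf x}_{i,u}+{\mathbf x}_{i,m}={\mathbf x}_{h,u'}+{\mathbf x}_{j,u'}+{\mathbf x}_{j,m}.$$ Then the number of $6$-cycles in the Tanner graph of $H$ is $$\mathcal{N}_6=2^\ell\sum_{0\le h<i<j\le n_c-1}\ \sum_{m=0}^{n_v-1}\rho^{h,i,j}_m.$$ In particular, the Tanner graph of $H$ has no $6$-cycles if and only if all $\rho^{h,i,j}_m=0$.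
   Context: Rows and columns of $N\times N$ binary matrices are indexed by $\mathbb{F}_2^\ell$ via ${\mathbf x}=(x_1,\dots,x_\ell)\leftrightarrow 1+\sum_i x_i2^{i-1}$. For ${\mathbf a}\in\mathbb{F}_2^\ell$, $P_{\mathbf a}$ is the $N\times N$ binary matrix with $(P_{\mathbf a})_{{\mathbf x},{\mathbf y}}=1$ iff ${\mathbf y}={\mathbf x}+{\mathbf a}$. The Tanner graph of a binary matrix is the bipartite graph with check nodes = rows, variable nodes = columns, edges at the $1$-entries. A $k$-cycle is a closed walk of $k$ edges with distinct vertices and distinct edges. *)

(* Defs.v *)
From mathcomp Require Import all_boot all_order all_algebra.
Set Implicit Arguments. Unset Strict Implicit. Unset Printing Implicit Defensive.
Import GRing.Theory.
Local Open Scope ring_scope.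

(* Index convention: the 0-based index k in {0,...,2^l-1} within a block
   corresponds to x = (x_1,...,x_l) with k = sum_i x_i 2^(i-1),
   i.e. coordinate t (0-based) of x is the t-th binary digit of k. *)
Definition bits (l k : nat) : 'rV['F_2]_l :=
  \row_(t < l) (((k %/ 2 ^ t) %% 2)%N)%:R.

Definition Pmx (l : nat) (a : 'rV['F_2]_l) : 'M['F_2]_(2 ^ l) :=
  \matrix_(r, c) (bits l c == bits l r + a)%:R.

Definition Hmx (l nc nv : nat) (X : 'I_nc -> 'I_nv -> 'rV['F_2]_l)
  : 'M['F_2]_(\sum_(h < nc) 2 ^ l, \sum_(u < nv) 2 ^ l) :=
  \mxblock_(h < nc, u < nv) Pmx (X h u).

(* Tanner graph of a binary matrix A : vertices are rows (check nodes,
   inl) and columns (variable nodes, inr); edges are the 1-entries,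
   represented by their position (row, column). *)
Definition tvertex (r c : nat) := ('I_r + 'I_c)%type.

Definition edge_of (r c : nat) (v v' : tvertex r c) : option ('I_r * 'I_c) :=
  match v, v' with
  | inl i, inr j => Some (i, j)
  | inr j, inl i => Some (i, j)
  | _, _ => None
  end.

Definition walk_edges (r c k : nat) (w : {ffun 'I_k -> tvertex r c}) :=
  [seq edge_of (w t) (w (ordS t)) | t : 'I_k].

Definition is_edge (r c : nat) (A : 'M['F_2]_(r, c)) (o : option ('I_r * 'I_c)) :=
  if o is Some e then A e.1 e.2 != 0 else false.

Definition cycle_walk (r c k : nat) (A : 'M['F_2]_(r, c))
  (w : {ffun 'I_k -> tvertex r c}) : bool :=
  [&& all (is_edge A) (walk_edges w), injectiveb w & uniq (walk_edges w)].

Definition walk_edge_set (r c k : nat) (w : {ffun 'I_k -> tvertex r c})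
  : {set 'I_r * 'I_c} := [set e | Some e \in walk_edges w].

(* number of k-cycles of the Tanner graph: cycles counted as subgraphs,
   i.e. as the edge sets of such closed walks *)
Definition num_cycles (r c : nat) (A : 'M['F_2]_(r, c)) (k : nat) : nat :=
  #|[set E : {set 'I_r * 'I_c} |
      [exists w : {ffun 'I_k -> tvertex r c}, cycle_walk A w && (E == walk_edge_set w)]]|.

Definition rho (l nc nv : nat) (X : 'I_nc -> 'I_nv -> 'rV['F_2]_l)
  (h i j : 'I_nc) (m : 'I_nv) : nat :=
  #|[set p : 'I_nv * 'I_nv | [&& p.1 != m, p.2 != m, p.1 != p.2 &
       X h p.1 + X i p.1 + X i m == X h p.2 + X j p.2 + X j m]]|.

(* Main.v *)
Require Import Defs.
From mathcomp Require Import all_boot all_order all_algebra.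
From mathcomp Require Import zify.
Set Implicit Arguments. Unset Strict Implicit. Unset Printing Implicit Defensive.
Import GRing.Theory.
Local Open Scope ring_scope.


Lemma F2_natr (a b : nat) : (a < 2)%N -> (b < 2)%N -> (a%:R = b%:R :> 'F_2) -> a = b.
Proof.
case: a => [|[|//]] _; case: b => [|[|//]] _ //=;
  by [move=> /esym/eqP; rewrite oner_eq0 | move=> /eqP; rewrite oner_eq0].
Qed.

Lemma bits_inj l : injective (fun k : 'I_(2 ^ l) => bits l k).
Proof.
move=> k1 k2 /= H.
have Hd : forall t, (t < l)%N -> ((k1 %/ 2 ^ t) %% 2 = (k2 %/ 2 ^ t) %% 2)%N.
  move=> t lt; have /rowP /(_ (Ordinal lt)) := H; rewrite !mxE /=.
  by apply: F2_natr; rewrite ltn_mod.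
have Hs : forall s, (s <= l)%N -> (k1 %/ 2 ^ (l - s) = k2 %/ 2 ^ (l - s))%N.
  elim=> [_|s IH ls].
    by rewrite subn0 !divn_small.
  have e : forall k : nat, (k %/ 2 ^ (l - s.+1) = (k %/ 2 ^ (l - s.+1)) %/ 2 * 2 + (k %/ 2 ^ (l - s.+1)) %% 2)%N.
    by move=> k; rewrite -divn_eq.
  have e2 : forall k : nat, ((k %/ 2 ^ (l - s.+1)) %/ 2 = k %/ 2 ^ (l - s))%N.
    move=> k; rewrite -divnMA -expnSr; congr (divn _ (expn _ _)); lia.
  rewrite (e k1) (e k2) !e2 IH ?Hd //; [lia | lia].
apply/val_inj => /=.
by have := Hs l (leqnn l); rewrite subnn !expn0 !divn1.
Qed.

Lemma bits_surj l (v : 'rV['F_2]_l) : exists k : 'I_(2 ^ l), bits l k = v.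
Proof.
have := inj_card_onto (@bits_inj l) _ v.
rewrite card_mx card_Fp // card_ord mul1n => /(_ (leqnn _)) /codomP [k ->].
by exists k.
Qed.

Lemma char2 l (v : 'rV['F_2]_l) : v + v = 0.
Proof.
apply/rowP => t; rewrite !mxE.
by case: (v 0 t) => [[|[|//]] ?]; apply/val_inj.
Qed.


Section Idx.
Variables (l n : nat).
Local Notation I := 'I_(\sum_(h < n) 2 ^ l).
Definition ib (r : I) : 'I_n := @tagnat.sig1 n (fun _ => 2 ^ l)%N r.
Definition ik (r : I) : 'I_(2 ^ l) := @tagnat.sig2 n (fun _ => 2 ^ l)%N r.
Definition iv (r : I) : 'rV['F_2]_l := bits l (ik r).

Lemma idx_inj r r' : ib r = ib r' -> iv r = iv r' -> r = r'.
Proof.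
move=> e1 /bits_inj e2; apply/val_inj.
rewrite [LHS](@tagnat.rect n (fun _ => 2 ^ l)%N) [RHS](@tagnat.rect n (fun _ => 2 ^ l)%N).
rewrite -/(ib r) -/(ib r') e1; congr (_ + _)%N.
by have := congr1 val e2.
Qed.

Lemma idx_rank (h : 'I_n) (k : 'I_(2 ^ l)) :
  ib (@tagnat.Rank n (fun _ => 2 ^ l)%N h k) = h /\ ik (@tagnat.Rank n (fun _ => 2 ^ l)%N h k) = k.
Proof.
split; first exact: tagnat.Rank1K.
by apply/val_inj; rewrite /ik tagnat.Rank2K.
Qed.

Lemma idx_surj h v : exists r, ib r = h /\ iv r = v.
Proof.
have [k <-] := bits_surj v.
exists (@tagnat.Rank n (fun _ => 2 ^ l)%N h k).
by rewrite /iv; have [-> ->] := idx_rank h k.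
Qed.
End Idx.


Lemma neq_lt (a b : nat) : a != b -> (a < b)%N \/ (b < a)%N.
Proof. by rewrite neq_ltn => /orP. Qed.

Ltac es_eq := apply/setP => ?; rewrite !inE /=;
  do 6 (case: (_ == _); rewrite ?orbT ?orbF //=).

Section Main.
Variables (l nc nv : nat) (X : 'I_nc -> 'I_nv -> 'rV['F_2]_l).
Local Notation R := 'I_(\sum_(h < nc) 2 ^ l).
Local Notation C := 'I_(\sum_(u < nv) 2 ^ l).

Definition adj (r : R) (c : C) := iv c == iv r + X (ib r) (ib c).

Lemma HmxE r c : (Hmx X r c != 0) = adj r c.
Proof.
rewrite /Hmx /mxblock !mxE /adj /iv /ib /ik.
by case: (bits _ _ == _); rewrite ?oner_eq0 ?eqxx.
Qed.

Lemma adj_sym r c : adj r c = (iv r == iv c + X (ib r) (ib c)).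
Proof.
rewrite /adj; apply/eqP/eqP => ->; by rewrite -addrA char2 addr0.
Qed.

Lemma enum6 : enum 'I_6 = [:: inord 0; inord 1; inord 2; inord 3; inord 4; inord 5].
Proof. by apply: (inj_map val_inj); rewrite val_enum_ord /= !inordK. Qed.

Lemma ordS6 (k : nat) : (k < 6)%N -> ordS (inord k : 'I_6) = inord (k.+1 %% 6).
Proof. by move=> lk; apply/val_inj; rewrite /= !inordK // ltn_mod. Qed.

Lemma walk_edges6 (w : {ffun 'I_6 -> tvertex (\sum_(h < nc) 2 ^ l) (\sum_(u < nv) 2 ^ l)}) :
  walk_edges w = [:: edge_of (w (inord 0)) (w (inord 1));
                     edge_of (w (inord 1)) (w (inord 2));
                     edge_of (w (inord 2)) (w (inord 3));
                     edge_of (w (inord 3)) (w (inord 4));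
                     edge_of (w (inord 4)) (w (inord 5));
                     edge_of (w (inord 5)) (w (inord 0))].
Proof. by rewrite /walk_edges /image_mem enum6 /= !ordS6. Qed.


Lemma share_row r c c' : adj r c -> adj r c' -> ib c = ib c' -> c = c'.
Proof.
rewrite /adj => /eqP e /eqP e' eb; apply: idx_inj => //.
by rewrite e e' eb.
Qed.

Lemma share_col r r' c : adj r c -> adj r' c -> ib r = ib r' -> r = r'.
Proof.
rewrite !adj_sym => /eqP e /eqP e' eb; apply: idx_inj => //.
by rewrite e e' eb.
Qed.

Definition Six := (R * C * R * C * R * C)%type.

Definition es (t : Six) : {set R * C} :=
  let: (r0, c1, r2, c3, r4, c5) := t in
  [set (r0, c1); (r2, c1); (r2, c3); (r4, c3); (r4, c5); (r0, c5)].

Definition good (t : Six) : bool :=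
  let: (r0, c1, r2, c3, r4, c5) := t in
  [&& adj r0 c1, adj r2 c1, adj r2 c3, adj r4 c3 & adj r4 c5] &&
  [&& adj r0 c5, (ib r0 < ib r2)%N, (ib r2 < ib r4)%N & [&& c1 != c3, c3 != c5 & c1 != c5]].

Lemma core r0 c1 r2 c3 r4 c5 :
  adj r0 c1 -> adj r2 c1 -> adj r2 c3 -> adj r4 c3 -> adj r4 c5 -> adj r0 c5 ->
  r0 != r2 -> r2 != r4 -> r0 != r4 -> c1 != c3 -> c3 != c5 -> c1 != c5 ->
  exists2 t, good t & es t = es (r0, c1, r2, c3, r4, c5).
Proof.
move=> a01 a21 a23 a43 a45 a05 n02 n24 n04 n13 n35 n15.
have b02 : (ib r0 : nat) != ib r2.
  by apply: contra n02 => /eqP /val_inj e; apply/eqP; exact: share_col a01 a21 e.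
have b24 : (ib r2 : nat) != ib r4.
  by apply: contra n24 => /eqP /val_inj e; apply/eqP; exact: share_col a23 a43 e.
have b04 : (ib r0 : nat) != ib r4.
  by apply: contra n04 => /eqP /val_inj e; apply/eqP; exact: share_col a05 a45 e.
have [l02|l20] : (ib r0 < ib r2)%N \/ (ib r2 < ib r0)%N by apply: neq_lt b02.
- have [l24|l42] : (ib r2 < ib r4)%N \/ (ib r4 < ib r2)%N by apply: neq_lt b24.
  + exists (r0, c1, r2, c3, r4, c5); last by [].
    rewrite /good; repeat (apply/andP; split); done.
  + have [l04|l40] : (ib r0 < ib r4)%N \/ (ib r4 < ib r0)%N by apply: neq_lt b04.
    * exists (r0, c5, r4, c3, r2, c1); last by es_eq.
      rewrite /good; repeat (apply/andP; split); try done; by rewrite eq_sym.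
    * exists (r4, c5, r0, c1, r2, c3); last by es_eq.
      rewrite /good; repeat (apply/andP; split); try done; by rewrite eq_sym.
- have [l04|l40] : (ib r0 < ib r4)%N \/ (ib r4 < ib r0)%N by apply: neq_lt b04.
  + exists (r2, c1, r0, c5, r4, c3); last by es_eq.
    rewrite /good; repeat (apply/andP; split); try done; by rewrite eq_sym.
  + have [l24|l42] : (ib r2 < ib r4)%N \/ (ib r4 < ib r2)%N by apply: neq_lt b24.
    * exists (r2, c3, r4, c5, r0, c1); last by es_eq.
      rewrite /good; repeat (apply/andP; split); try done; by rewrite eq_sym.
    * exists (r4, c3, r2, c1, r0, c5); last by es_eq.
      rewrite /good; repeat (apply/andP; split); try done; by rewrite eq_sym.
Qed.

End Main.


Lemma negbT_sym (T : eqType) (a b : T) : a != b -> b != a.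
Proof. by rewrite eq_sym. Qed.

Ltac es_eq2 := apply/setP => ?; rewrite !inE /= ?(inj_eq (@Some_inj _));
  do 6 (case: (_ == _); rewrite ?orbT ?orbF //=).

Section Main2.
Variables (l nc nv : nat) (X : 'I_nc -> 'I_nv -> 'rV['F_2]_l).
Local Notation R := 'I_(\sum_(h < nc) 2 ^ l).
Local Notation C := 'I_(\sum_(u < nv) 2 ^ l).
Local Notation adj := (adj X).
Local Notation good := (good X).

Lemma walk_good (w : {ffun 'I_6 -> tvertex (\sum_(h < nc) 2 ^ l) (\sum_(u < nv) 2 ^ l)}) : cycle_walk (Hmx X) w -> exists2 t, good t & es t = walk_edge_set w.
Proof.
case/and3P => Hall /injectiveP Hinj _.
have D : forall i j, (i < 6)%N -> (j < 6)%N -> w (inord i) = w (inord j) -> i = j.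
  move=> i j li lj /Hinj /(congr1 val) /=; rewrite !inordK //.
have d02 : w (inord 0) != w (inord 2) by apply/eqP => /(D 0%N 2%N isT isT).
have d24 : w (inord 2) != w (inord 4) by apply/eqP => /(D 2%N 4%N isT isT).
have d04 : w (inord 0) != w (inord 4) by apply/eqP => /(D 0%N 4%N isT isT).
have d13 : w (inord 1) != w (inord 3) by apply/eqP => /(D 1%N 3%N isT isT).
have d35 : w (inord 3) != w (inord 5) by apply/eqP => /(D 3%N 5%N isT isT).
have d15 : w (inord 1) != w (inord 5) by apply/eqP => /(D 1%N 5%N isT isT).
move: d02 d24 d04 d13 d35 d15 Hall; rewrite /walk_edge_set walk_edges6.
case: (w (inord 0)) => [x0|x0]; case: (w (inord 1)) => [x1|x1];
case: (w (inord 2)) => [x2|x2]; case: (w (inord 3)) => [x3|x3];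
case: (w (inord 4)) => [x4|x4]; case: (w (inord 5)) => [x5|x5]; rewrite /= ?andbF //.
- move=> n02 n24 n04 n13 n35 n15; rewrite !HmxE andbT => /and5P [a01 a21 a23 a43 /andP [a45 a05]].
  have [t gt et] := core a01 a21 a23 a43 a45 a05 n02 n24 n04 n13 n35 n15.
  by exists t => //; rewrite et; es_eq2.
- move=> n02 n24 n04 n13 n35 n15; rewrite !HmxE andbT => /and5P [a01 a21 a23 a43 /andP [a45 a05]].
  have [t gt et] := core a21 a23 a43 a45 a05 a01 n13 n35 n15 n24 (negbT_sym n04) (negbT_sym n02).
  by exists t => //; rewrite et; es_eq2.
Qed.
End Main2.


Section Main3.
Variables (l nc nv : nat) (X : 'I_nc -> 'I_nv -> 'rV['F_2]_l).
Local Notation R := 'I_(\sum_(h < nc) 2 ^ l).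
Local Notation C := 'I_(\sum_(u < nv) 2 ^ l).
Local Notation adj := (adj X).
Local Notation good := (good X).

Lemma good_walk (t : Six l nc nv) : good t ->
  exists w : {ffun 'I_6 -> tvertex (\sum_(h < nc) 2 ^ l) (\sum_(u < nv) 2 ^ l)},
    cycle_walk (Hmx X) w && (es t == walk_edge_set w).
Proof.
case: t => [[[[[r0 c1] r2] c3] r4] c5].
case/andP => /and5P [a01 a21 a23 a43 a45] /and4P [a05 l02 l24 /and3P [n13 n35 n15]].
have n02 : r0 != r2 by apply: contraTneq l02 => ->; rewrite ltnn.
have n24 : r2 != r4 by apply: contraTneq l24 => ->; rewrite ltnn.
have n04 : r0 != r4 by apply: contraTneq (ltn_trans l02 l24) => ->; rewrite ltnn.
pose L : seq (tvertex (\sum_(h < nc) 2 ^ l) (\sum_(u < nv) 2 ^ l)) :=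
  [:: inl r0; inr c1; inl r2; inr c3; inl r4; inr c5].
exists [ffun k : 'I_6 => nth (inl r0) L k].
have ew : forall k, (k < 6)%N -> [ffun k : 'I_6 => nth (inl r0) L k] (inord k) = nth (inl r0) L k.
  by move=> k lk; rewrite ffunE inordK.
rewrite /cycle_walk /walk_edge_set walk_edges6 !ew //= !HmxE a01 a21 a23 a43 a45 a05 /=.
apply/andP; split.
  have F := (negbTE n02, negbTE n24, negbTE n04, negbTE n13, negbTE n35, negbTE n15,
    negbTE (negbT_sym n02), negbTE (negbT_sym n24), negbTE (negbT_sym n04),
    negbTE (negbT_sym n13), negbTE (negbT_sym n35), negbTE (negbT_sym n15)).
  apply/andP; split.
    apply/injectiveP => -[i Hi] [j Hj]; rewrite !ffunE /= => E; apply/val_inj => /=.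
    move: Hi Hj E.
    case: i => [|[|[|[|[|[|//]]]]]] _; case: j => [|[|[|[|[|[|//]]]]]] _ //= E;
    try (by case: E); case: E => /eqP; by rewrite ?F.
  by rewrite /= !inE ?(inj_eq (@Some_inj _)) !xpair_eqE ?F ?eqxx ?andbF.
by apply/eqP; es_eq2.
Qed.

Lemma es_memP (t : Six l nc nv) r c : good t -> (r, c) \in es t ->
  let: (r0, c1, r2, c3, r4, c5) := t in
  [/\ r = r0 \/ r = r2 \/ r = r4, r = r0 -> c = c1 \/ c = c5,
      r = r2 -> c = c1 \/ c = c3 & r = r4 -> c = c3 \/ c = c5].
Proof.
case: t => [[[[[r0 c1] r2] c3] r4] c5].
case/andP => _ /and4P [_ l02 l24 _].
have n02 : r0 <> r2 by move=> e; rewrite e ltnn in l02.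
have n24 : r2 <> r4 by move=> e; rewrite e ltnn in l24.
have n04 : r0 <> r4 by move=> e; have := ltn_trans l02 l24; rewrite e ltnn.
rewrite /es !inE !xpair_eqE.
move=> /orP [/orP [/orP [/orP [/orP [H|H]|H]|H]|H]|H]; case/andP: H => /eqP -> /eqP ->;
  split; intuition congruence.
Qed.

Lemma ord3 (a0 a2 a4 b0 b2 b4 : nat) : (a0 < a2 < a4)%N -> (b0 < b2 < b4)%N ->
  (b0 = a0 \/ b0 = a2 \/ b0 = a4) -> (b2 = a0 \/ b2 = a2 \/ b2 = a4) ->
  (b4 = a0 \/ b4 = a2 \/ b4 = a4) ->
  (a0 = b0 \/ a0 = b2 \/ a0 = b4) -> (a2 = b0 \/ a2 = b2 \/ a2 = b4) ->
  (a4 = b0 \/ a4 = b2 \/ a4 = b4) -> [/\ b0 = a0, b2 = a2 & b4 = a4].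
Proof.
move=> /andP [? ?] /andP [? ?] Hb0 Hb2 Hb4 Ha0 Ha2 Ha4.
have e0 : b0 = a0 by destruct Hb0 as [?|[?|?]]; destruct Ha0 as [?|[?|?]]; lia.
have e4 : b4 = a4 by destruct Hb4 as [?|[?|?]]; destruct Ha4 as [?|[?|?]]; lia.
by split => //; destruct Hb2 as [?|[?|?]]; lia.
Qed.

Lemma or3_ib (x a b c : R) : x = a \/ x = b \/ x = c ->
  (ib x : nat) = ib a \/ (ib x : nat) = ib b \/ (ib x : nat) = ib c.
Proof. by case=> [->|[->|->]]; auto. Qed.

Lemma es_inj : {in [set t | good t] &, injective (@es l nc nv)}.
Proof.
move=> [[[[[r0 c1] r2] c3] r4] c5] [[[[[s0 d1] s2] d3] s4] d5]; rewrite !inE => g g' E.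
have M : forall r c, (r, c) \in es (s0, d1, s2, d3, s4, d5) -> _ :=
  fun r c h => @es_memP (r0, c1, r2, c3, r4, c5) r c g ltac:(by rewrite E).
have M' : forall r c, (r, c) \in es (r0, c1, r2, c3, r4, c5) -> _ :=
  fun r c h => @es_memP (s0, d1, s2, d3, s4, d5) r c g' ltac:(by rewrite -E).
have p01 : (s0, d1) \in es (s0, d1, s2, d3, s4, d5) by rewrite !inE eqxx ?orbT.
have p21 : (s2, d1) \in es (s0, d1, s2, d3, s4, d5) by rewrite !inE eqxx ?orbT.
have p23 : (s2, d3) \in es (s0, d1, s2, d3, s4, d5) by rewrite !inE eqxx ?orbT.
have p43 : (s4, d3) \in es (s0, d1, s2, d3, s4, d5) by rewrite !inE eqxx ?orbT.
have p45 : (s4, d5) \in es (s0, d1, s2, d3, s4, d5) by rewrite !inE eqxx ?orbT.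
have p05 : (s0, d5) \in es (s0, d1, s2, d3, s4, d5) by rewrite !inE eqxx ?orbT.
have q01 : (r0, c1) \in es (r0, c1, r2, c3, r4, c5) by rewrite !inE eqxx ?orbT.
have q21 : (r2, c1) \in es (r0, c1, r2, c3, r4, c5) by rewrite !inE eqxx ?orbT.
have q23 : (r2, c3) \in es (r0, c1, r2, c3, r4, c5) by rewrite !inE eqxx ?orbT.
have q43 : (r4, c3) \in es (r0, c1, r2, c3, r4, c5) by rewrite !inE eqxx ?orbT.
have q45 : (r4, c5) \in es (r0, c1, r2, c3, r4, c5) by rewrite !inE eqxx ?orbT.
have q05 : (r0, c5) \in es (r0, c1, r2, c3, r4, c5) by rewrite !inE eqxx ?orbT.
move: (g) (g') => /andP [_ /and4P [_ l02 l24 /and3P [n13 n35 n15]]].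
move=> /andP [_ /and4P [_ m02 m24 _]].
have [hs0 _ _ _] := M _ _ p01.
have [hs2 _ _ _] := M _ _ p23.
have [hs4 _ _ _] := M _ _ p45.
have [hr0 _ _ _] := M' _ _ q01.
have [hr2 _ _ _] := M' _ _ q23.
have [hr4 _ _ _] := M' _ _ q45.
have ibE : forall x y : R, x = y -> (ib x : nat) = ib y by move=> x y ->.
have [e0 e2 e4] : [/\ (ib s0 : nat) = ib r0, (ib s2 : nat) = ib r2 & (ib s4 : nat) = ib r4].
  apply: ord3; rewrite ?l02 ?l24 ?m02 ?m24 //;
  by apply: or3_ib.
have es0 : s0 = r0.
  case: hs0 => [//|[e|e]]; move: e0; rewrite e => e0.
    by rewrite e0 ltnn in l02.
  by have := ltn_trans l02 l24; rewrite e0 ltnn.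
have es2 : s2 = r2.
  case: hs2 => [e|[//|e]]; move: e2; rewrite e => e2.
    by rewrite e2 ltnn in l02.
  by rewrite e2 ltnn in l24.
have es4 : s4 = r4.
  case: hs4 => [e|[e|//]]; move: e4; rewrite e => e4.
    by have := ltn_trans l02 l24; rewrite e4 ltnn.
  by rewrite e4 ltnn in l24.
subst s0 s2 s4.
have [_ h1 _ _] := M _ _ p01.
have [_ _ h1' _] := M _ _ p21.
have [_ _ h3 _] := M _ _ p23.
have [_ _ _ h3'] := M _ _ p43.
have [_ _ _ h5] := M _ _ p45.
have [_ h5' _ _] := M _ _ p05.
have N13 : c1 <> c3 by apply/eqP.
have N35 : c3 <> c5 by apply/eqP.
have N15 : c1 <> c5 by apply/eqP.
have ed1 : d1 = c1 by case: (h1 erefl); case: (h1' erefl); congruence.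
have ed3 : d3 = c3 by case: (h3 erefl); case: (h3' erefl); congruence.
have ed5 : d5 = c5 by case: (h5 erefl); case: (h5' erefl); congruence.
by rewrite ed1 ed3 ed5.
Qed.
End Main3.


Lemma alg (V : zmodType) (cc : forall v : V, v + v = 0) (v0 v1 v2 v3 v4 v5 A B C D E F : V) :
  v1 = v0 + A -> v1 = v2 + B -> v3 = v2 + C -> v3 = v4 + D -> v5 = v4 + E -> v5 = v0 + F ->
  A + B + C = F + E + D.
Proof.
move=> e1 e2 e3 e4 e5 e6.
have e2' : v2 = v1 + B by rewrite e2 -addrA cc addr0.
have e4' : v4 = v3 + D by rewrite e4 -addrA cc addr0.
have HF : F = A + B + C + D + E.
  apply: (@addrI _ v0); rewrite -e6 e5 e4' e3 e2' e1 !addrA.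
  done.
by rewrite HF -(addrA _ E E) cc addr0 -(addrA _ D D) cc addr0.
Qed.

Lemma alg2 (V : zmodType) (cc : forall v : V, v + v = 0) (v0 A B C D E F : V) :
  A + B + C = F + E + D -> v0 + A + B + C + D + E = v0 + F.
Proof.
move=> H.
have -> : v0 + A + B + C + D + E = v0 + (A + B + C) + D + E by rewrite !addrA.
by rewrite H !addrA -(addrA _ D D) cc addr0 -(addrA _ E E) cc addr0.
Qed.

Section Main4.
Variables (l nc nv : nat) (X : 'I_nc -> 'I_nv -> 'rV['F_2]_l).
Local Notation R := 'I_(\sum_(h < nc) 2 ^ l).
Local Notation C := 'I_(\sum_(u < nv) 2 ^ l).
Local Notation adj := (adj X).
Local Notation good := (good X).

Definition Tup := ('I_nc * 'I_(2 ^ l) * 'I_nc * 'I_nc * 'I_nv * 'I_nv * 'I_nv)%type.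

Definition psi (t : Six l nc nv) : Tup :=
  let: (r0, c1, r2, c3, r4, c5) := t in (ib r0, ik r0, ib r2, ib r4, ib c3, ib c1, ib c5).

Definition cond (q : Tup) : bool :=
  let: (h, k, i, j, m, u, u') := q in
  (h < i)%N && (i < j)%N &&
  [&& u != m, u' != m, u != u' & X h u + X i u + X i m == X h u' + X j u' + X j m].

Lemma psi_inj : {in [set t | good t] &, injective psi}.
Proof.
move=> [[[[[r0 c1] r2] c3] r4] c5] [[[[[s0 d1] s2] d3] s4] d5]; rewrite !inE => g g'.
move: g g' => /andP [/and5P [a01 a21 a23 a43 a45] _] /andP [/and5P [b01 b21 b23 b43 b45] _].
move: a21 a43 b21 b43; rewrite !adj_sym.
move: a01 a23 a45 b01 b23 b45; rewrite /adj => /eqP a01 /eqP a23 /eqP a45 /eqP b01 /eqP b23 /eqP b45.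
move=> /eqP a21 /eqP a43 /eqP b21 /eqP b43 [e0 ek e2 e4 e3 e1 e5].
have E0 : r0 = s0 by apply: idx_inj => //; rewrite /iv ek.
subst s0.
have E1 : c1 = d1 by apply: idx_inj => //; rewrite a01 b01 e1.
subst d1.
have E2 : r2 = s2 by apply: idx_inj => //; rewrite a21 b21 e2.
subst s2.
have E3 : c3 = d3 by apply: idx_inj => //; rewrite a23 b23 e3.
subst d3.
have E4 : r4 = s4 by apply: idx_inj => //; rewrite a43 b43 e4.
subst s4.
have E5 : c5 = d5 by apply: idx_inj => //; rewrite a45 b45 e5.
by subst d5.
Qed.


Lemma neq_ib (x y : C) (r : R) : adj r x -> adj r y -> x != y -> ib x != ib y.
Proof. by move=> ax ay; apply: contra => /eqP e; apply/eqP; apply: share_row ax ay e. Qed.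

Lemma psi_im : [set psi t | t in [set t | good t]] = [set q | cond q].
Proof.
apply/setP => q; rewrite inE; apply/imsetP/idP.
  move=> [[[[[[r0 c1] r2] c3] r4] c5]]; rewrite inE => g ->.
  move: (g) => /andP [/and5P [a01 a21 a23 a43 a45] /and4P [a05 l02 l24 /and3P [n13 n35 n15]]].
  rewrite /= l02 l24 /=.
  rewrite (neq_ib a21 a23 n13) (neq_ib a45 a43 (negbT_sym n35)) (neq_ib a01 a05 n15) /=.
  move: a01 a21 a23 a43 a45 a05; rewrite /adj.
  move=> /eqP a01 /eqP a21 /eqP a23 /eqP a43 /eqP a45 /eqP a05.
  by apply/eqP; apply: alg (@char2 l) _ _ _ _ _ _ _ _ _ _ _ _ a01 a21 a23 a43 a45 a05.
case: q => [[[[[[h k] i] j] m] u] u'] /= /andP [/andP [hi ij] /and4P [um u'm uu' Eq]].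
pose r0 := @tagnat.Rank nc (fun _ => 2 ^ l)%N h k.
have [b0 k0] : ib r0 = h /\ ik r0 = k := idx_rank h k.
have [c1 [b1 v1]] := idx_surj (n := nv) u (iv r0 + X h u).
have [r2 [b2 v2]] := idx_surj (n := nc) i (iv c1 + X i u).
have [c3 [b3 v3]] := idx_surj (n := nv) m (iv r2 + X i m).
have [r4 [b4 v4]] := idx_surj (n := nc) j (iv c3 + X j m).
have [c5 [b5 v5]] := idx_surj (n := nv) u' (iv r4 + X j u').
exists (r0, c1, r2, c3, r4, c5); last by rewrite /psi b0 k0 b1 b2 b3 b4 b5.
have a01 : adj r0 c1 by rewrite /adj v1 b0 b1 eqxx.
have a21 : adj r2 c1 by rewrite adj_sym v2 b2 b1 eqxx.
have a23 : adj r2 c3 by rewrite /adj v3 b2 b3 eqxx.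
have a43 : adj r4 c3 by rewrite adj_sym v4 b4 b3 eqxx.
have a45 : adj r4 c5 by rewrite /adj v5 b4 b5 eqxx.
have a05 : adj r0 c5.
  rewrite /adj v5 v4 v3 v2 v1 b0 b5; apply/eqP.
  exact: alg2 (@char2 l) _ _ _ _ _ _ _ (eqP Eq).
have N : forall (a b : 'I_nv) (x y : C), a != b -> ib x = a -> ib y = b -> x != y.
  by move=> a b x y ab ea eb; apply: contra ab => /eqP exy; rewrite -ea -eb exy.
rewrite inE /good a01 a21 a23 a43 a45 a05 b0 b2 b4 hi ij /=.
by rewrite (N _ _ _ _ um b1 b3) (N _ _ _ _ (negbT_sym u'm) b3 b5) (N _ _ _ _ uu' b1 b5).
Qed.

End Main4.


Lemma sum_pair (A B : finType) (Fn : A * B -> nat) :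
  (\sum_(q : A * B) Fn q = \sum_(a : A) \sum_(b : B) Fn (a, b))%N.
Proof. by rewrite pair_bigA; apply: eq_bigr => -[]. Qed.

Section Main5.
Variables (l nc nv : nat) (X : 'I_nc -> 'I_nv -> 'rV['F_2]_l).

Lemma rhoE h i j m : rho X h i j m =
  (\sum_(a : 'I_nv) \sum_(b : 'I_nv)
    if [&& a != m, b != m, a != b & (X h a + X i a + X i m == X h b + X j b + X j m)%R]
    then 1 else 0)%N.
Proof. by rewrite /rho -sum1dep_card big_mkcond sum_pair. Qed.

Lemma count_cond : #|[set q | cond X q]| =
  (2 ^ l * \sum_(h < nc) \sum_(i < nc | (h < i)%N) \sum_(j < nc | (i < j)%N)
               \sum_(m < nv) rho X h i j m)%N.
Proof.
rewrite -sum1dep_card big_mkcond !sum_pair /cond /=.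
rewrite big_distrr; apply: eq_bigr => h _ /=.
rewrite big_const_ord iter_addn_0 mulnC; congr (_ * _)%N.
rewrite [RHS]big_mkcond; apply: eq_bigr => i _.
case: (ltnP h i) => hi /=; last by rewrite !big1_eq.
rewrite [RHS]big_mkcond; apply: eq_bigr => j _.
case: (ltnP i j) => ij /=; last by rewrite !big1_eq.
by apply: eq_bigr => m _; rewrite rhoE.
Qed.

Lemma num_good : num_cycles (Hmx X) 6 = #|[set t | good X t]|.
Proof.
rewrite /num_cycles -(card_in_imset (@es_inj l nc nv X)); apply: eq_card => E.
rewrite inE; apply/existsP/imsetP.
  move=> [w /andP [cw /eqP ->]].
  have [t gt et] := walk_good cw.
  by exists t; rewrite ?inE.
move=> [t]; rewrite inE => gt ->.
have [w /andP [cw eE]] := good_walk gt.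
by exists w; rewrite cw.
Qed.

End Main5.

Unset Implicit Arguments.

Theorem mainTheorem14 (l nc nv : nat) (X : 'I_nc -> 'I_nv -> 'rV['F_2]_l) :
  (1 <= l)%N -> (1 <= nc)%N -> (1 <= nv)%N ->
  num_cycles (Hmx X) 6 =
    (2 ^ l * \sum_(h < nc) \sum_(i < nc | (h < i)%N) \sum_(j < nc | (i < j)%N)
               \sum_(m < nv) rho X h i j m)%N
  /\ (num_cycles (Hmx X) 6 = 0%N <->
      (forall (h i j : 'I_nc) (m : 'I_nv), (h < i)%N -> (i < j)%N -> rho X h i j m = 0%N)).
Proof.
move=> _ _ _.
have E1 : num_cycles (Hmx X) 6 =
    (2 ^ l * \sum_(h < nc) \sum_(i < nc | (h < i)%N) \sum_(j < nc | (i < j)%N)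
               \sum_(m < nv) rho X h i j m)%N.
  by rewrite num_good -(card_in_imset (@psi_inj l nc nv X)) psi_im count_cond.
split => //; rewrite E1; split.
- move/eqP; rewrite muln_eq0 expn_eq0 /= => H h i j m hi ij.
  move: H; rewrite sum_nat_eq0 => /forallP /(_ h) /=.
  rewrite sum_nat_eq0 => /forallP /(_ i); rewrite hi /=.
  rewrite sum_nat_eq0 => /forallP /(_ j); rewrite ij /=.
  by rewrite sum_nat_eq0 => /forallP /(_ m) /= /eqP.
- move=> H; rewrite big1 ?muln0 // => h _; rewrite big1 // => i hi.
  rewrite big1 // => j ij; rewrite big1 // => m _; exact: H.
Qed.
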